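(* Let $(B',\boldsymbol y',\boldsymbol z',\boldsymbol q',\boldsymbol a')$ be the mutation of a groupoid seed $(B,\boldsymbol y,\boldsymbol z,\boldsymbol q,\boldsymbol a)$ in direction $k$ with sign $\varepsilon\in\{\pm1\}$. Write $\beta$ for the action of $(B,\boldsymbol y,\boldsymbol z,\boldsymbol q,\boldsymbol a)$ and $\beta'$ for the action of $(B',\boldsymbol y',\boldsymbol z',\boldsymbol q',\boldsymbol a')$. Then for every $1\le i\le n$, $\beta'(y'_i)=\beta(y'_i)$, where $\beta(y'_i)$ means the expression for $y'_i$ in terms of $\boldsymbol y$ with each $y_j$ replaced by $\beta(y_j)$. Equivalently, the seed $(B',\beta'\boldsymbol y',\boldsymbol z')$ is the mutation in direction $k$ of the seed $(B,\beta\boldsymbol y,\boldsymbol z)$.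
   Context: Fix positive integers $n$ and $d_1,\dots,d_n$. A seed over $\mathbb R_{>0}$ is a triple $(B,\boldsymbol y,\boldsymbol z)$: $B=(b_{ij})$ an $n\times n$ integer matrix with a fixed diagonal $R=\mathrm{diag}(r_1,\dots,r_n)$, $r_i\in\mathbb Z_{>0}$, such that $RB$ is skew-symmetric; $\boldsymbol y\in\mathbb R_{>0}^n$; $\boldsymbol z=(z_{i,s})_{1\le i\le n,1\le s\le d_i-1}$ with $z_{i,s}\in\mathbb R_{\ge0}$. Put $P_k(\alpha)=1+\sum_{s=1}^{d_k-1}z_{k,s}\alpha^s+\alpha^{d_k}$, and for $\varepsilon\in\{\pm1\}$, $P^\circ_k(\alpha)=P_k(\alpha^\varepsilon)\alpha^{\frac{1-\varepsilon}{2}d_k}$; $[a]_+=\max(a,0)$. Seed mutation in direction $k$ with sign $\varepsilon$: $b'_{ij}=-b_{ij}$ if $i=k$ or $j=k$, else $b'_{ij}=b_{ij}+[-\varepsilon b_{ik}d_k]_+b_{kj}+b_{ik}[\varepsilon d_kb_{kj}]_+$; $y'_k=y_k^{-1}$, $y'_i=y_iy_k^{[\varepsilon d_kb_{ki}]_+}P^\circ_k(y_k^\varepsilon)^{-b_{ki}}$ ($i\ne k$); $z'_{k,s}=z_{k,d_k-s}$, $z'_{i,s}=z_{i,s}$ ($i\ne k$). A groupoid seed is a quintuple $(B,\boldsymbol y,\boldsymbol z,\boldsymbol q,\boldsymbol a)$ with $(B,\boldsymbol y,\boldsymbol z)$ a seed over $\mathbb R_{>0}$, $\boldsymbol q=(q_1,\dots,q_n)\in\mathbb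 R^n$ and $\boldsymbol a=(a_{i,s})_{1\le i\le n,1\le s\le d_i-1}$ real. Its action is $\beta(y_j)=y_j\exp\big(\sum_{i=1}^n r_ib_{ij}y_iq_i\big)$, extended multiplicatively/compositionally to expressions in $\boldsymbol y$ (e.g. $\beta(y_k^\varepsilon)=\beta(y_k)^\varepsilon$); $\beta(B,\boldsymbol y,\boldsymbol z,\boldsymbol q,\boldsymbol a)=(B,\beta\boldsymbol y,\boldsymbol z)$. The mutation in direction $k$ with sign $\varepsilon$ is $(B',\boldsymbol y',\boldsymbol z',\boldsymbol q',\boldsymbol a')$ where $(B',\boldsymbol y',\boldsymbol z')$ is the seed mutation and $q'_k=-q_ky_k^2+\sum_{i'=1}^n[\varepsilon d_kb_{ki'}]_+q_{i'}y_{i'}y_k+\frac{y_k}{r_k}\log\frac{P^\circ_k(\beta(y_k)^\varepsilon)}{P^\circ_k(y_k^\varepsilon)}$, $q'_i=q_iy_k^{-[\varepsilon d_kb_{ki}]_+}P^\circ_k(y_k^\varepsilon)^{b_{ki}}$ ($i\ne k$), $a'_{k,s}=a_{k,d_k-s}+\frac{\varepsilon}{r_k}\int_{y_k^\varepsilon}^{\beta(y_k)^\varepsilon}\frac{u^{\varepsilon(d_k-s)-1}}{P_k(u^\varepsilon)}\,du$, $a'_{i,s}=a_{i,s}$ ($i\ne k$). *)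

(* Defs.v *)
From Stdlib Require Import Reals ZArith.
From Coquelicot Require Import Coquelicot.
Open Scope R_scope.

(* Indices are 0-based: i ranges over 0..n-1 (paper: 1..n). *)

Fixpoint rsum (f : nat -> R) (m : nat) : R :=
  match m with
  | O => 0
  | S m' => rsum f m' + f m'
  end.

Definition posp (a : Z) : Z := Z.max a 0.

(* Groupoid seed (B, y, z, q, a); the diagonal R = diag(r) and the degrees d
   are fixed data passed separately. z i s and a i s are meaningful for
   1 <= s <= d i - 1. *)
Record GSeed := mkGSeed {
  gB : nat -> nat -> Z;
  gy : nat -> R;
  gz : nat -> nat -> R;
  gq : nat -> R;
  ga : nat -> nat -> R }.

Definition Ppoly (d : nat -> nat) (z : nat -> nat -> R) (k : nat) (al : R) : R :=
  1 + rsum (fun s => z k (S s) * al ^ (S s)) (d k - 1) + al ^ (d k).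

Definition Pcirc (d : nat -> nat) (z : nat -> nat -> R) (k : nat) (eps : Z) (al : R) : R :=
  Ppoly d z k (powerRZ al eps) * powerRZ al (((1 - eps) / 2) * Z.of_nat (d k)).

Definition mut_B (d : nat -> nat) (B : nat -> nat -> Z) (k : nat) (eps : Z)
  (i j : nat) : Z :=
  if orb (Nat.eqb i k) (Nat.eqb j k) then (- B i j)%Z
  else (B i j + posp (- eps * B i k * Z.of_nat (d k)) * B k j
        + B i k * posp (eps * Z.of_nat (d k) * B k j))%Z.

Definition mut_y (d : nat -> nat) (B : nat -> nat -> Z) (y : nat -> R)
  (z : nat -> nat -> R) (k : nat) (eps : Z) (i : nat) : R :=
  if Nat.eqb i k then / y k
  else y i * powerRZ (y k) (posp (eps * Z.of_nat (d k) * B k i))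
       * powerRZ (Pcirc d z k eps (powerRZ (y k) eps)) (- B k i).

Definition mut_z (d : nat -> nat) (z : nat -> nat -> R) (k : nat) (i s : nat) : R :=
  if Nat.eqb i k then z k (d k - s)%nat else z i s.

Definition action (n : nat) (r : nat -> Z) (S : GSeed) (j : nat) : R :=
  gy S j * exp (rsum (fun i => IZR (r i) * IZR (gB S i j) * gy S i * gq S i) n).

Definition mut_q (n : nat) (d : nat -> nat) (r : nat -> Z) (k : nat) (eps : Z)
  (S : GSeed) (i : nat) : R :=
  let B := gB S in let y := gy S in let z := gz S in let q := gq S in
  if Nat.eqb i k then
    - q k * (y k) ^ 2
    + rsum (fun i' => IZR (posp (eps * Z.of_nat (d k) * B k i')) * q i' * y i' * y k) n
    + (y k / IZR (r k)) *
        ln (Pcirc d z k eps (powerRZ (action n r S k) eps)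
            / Pcirc d z k eps (powerRZ (y k) eps))
  else q i * powerRZ (y k) (- posp (eps * Z.of_nat (d k) * B k i))
       * powerRZ (Pcirc d z k eps (powerRZ (y k) eps)) (B k i).

Definition mut_a (n : nat) (d : nat -> nat) (r : nat -> Z) (k : nat) (eps : Z)
  (S : GSeed) (i s : nat) : R :=
  let y := gy S in
  if Nat.eqb i k then
    ga S k (d k - s)%nat
    + IZR eps / IZR (r k) *
      RInt (fun u => powerRZ u (eps * (Z.of_nat (d k) - Z.of_nat s) - 1)
                     / Ppoly d (gz S) k (powerRZ u eps))
           (powerRZ (y k) eps) (powerRZ (action n r S k) eps)
  else ga S i s.

Definition gmutate (n : nat) (d : nat -> nat) (r : nat -> Z) (k : nat) (eps : Z)
  (S : GSeed) : GSeed :=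
  mkGSeed (mut_B d (gB S) k eps)
          (mut_y d (gB S) (gy S) (gz S) k eps)
          (mut_z d (gz S) k)
          (mut_q n d r k eps S)
          (mut_a n d r k eps S).

(* (B, y, z) with fixed r, d is a seed over R_{>0} (plus q, a real: no condition). *)
Definition is_gseed (n : nat) (d : nat -> nat) (r : nat -> Z) (S : GSeed) : Prop :=
  (forall i, (i < n)%nat -> (0 < r i)%Z) /\
  (forall i, (i < n)%nat -> (0 < d i)%nat) /\
  (forall i j, (i < n)%nat -> (j < n)%nat -> (r i * gB S i j = - (r j * gB S j i))%Z) /\
  (forall i, (i < n)%nat -> 0 < gy S i) /\
  (forall i s, (i < n)%nat -> (1 <= s)%nat -> (s <= d i - 1)%nat -> 0 <= gz S i s).

(* Main.v *)
Require Import Defs.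
From Stdlib Require Import Reals ZArith Lra Lia Psatz.
Open Scope R_scope.

Lemma rsum_ext f g m : (forall j, (j < m)%nat -> f j = g j) -> rsum f m = rsum g m.
Proof. induction m; intros H; simpl; auto. rewrite IHm, H; auto. Qed.

Lemma rsum_plus f g m : rsum (fun j => f j + g j) m = rsum f m + rsum g m.
Proof. induction m; simpl; [ring|rewrite IHm; ring]. Qed.

Lemma rsum_scal c f m : rsum (fun j => c * f j) m = c * rsum f m.
Proof. induction m; simpl; [ring|rewrite IHm; ring]. Qed.

Lemma rsum_split f k m : (k < m)%nat ->
  rsum f m = f k + rsum (fun j => if Nat.eqb j k then 0 else f j) m.
Proof.
  induction m; intros H; [lia|]. simpl.
  destruct (Nat.eq_dec k m) as [->|Hn].
  - rewrite Nat.eqb_refl.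
    rewrite (rsum_ext (fun j => if Nat.eqb j m then 0 else f j) f m).
    + ring.
    + intros j Hj. destruct (Nat.eqb_spec j m); [lia|auto].
  - rewrite IHm by lia. destruct (Nat.eqb_spec m k); [lia|]. ring.
Qed.

Lemma rsum_nonneg f m : (forall j, (j < m)%nat -> 0 <= f j) -> 0 <= rsum f m.
Proof. induction m; intros H; simpl; [lra|].
  assert (0 <= f m) by (apply H; lia).
  assert (0 <= rsum f m) by (apply IHm; intros; apply H; lia). lra. Qed.

Lemma powerRZ_exp a z : 0 < a -> powerRZ a z = exp (IZR z * ln a).
Proof. intros. rewrite powerRZ_Rpower by auto. reflexivity. Qed.

Lemma posp_mul r x : (0 <= r)%Z -> posp (r * x) = (r * posp x)%Z.
Proof. intros. unfold posp. destruct (Z.le_ge_cases x 0).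
  - rewrite (Z.max_r x) by lia. rewrite Z.max_r by nia. ring.
  - rewrite (Z.max_l x) by lia. rewrite Z.max_l by nia. ring. Qed.

Lemma Pcirc_pos d z k eps al :
  (0 < d k)%nat -> (forall s, (1 <= s)%nat -> (s <= d k - 1)%nat -> 0 <= z k s) ->
  0 < al -> 0 < Pcirc d z k eps al.
Proof.
  intros Hd Hz Hal. unfold Pcirc, Ppoly.
  set (b := powerRZ al eps). assert (Hb : 0 < b) by (apply powerRZ_lt; auto).
  apply Rmult_lt_0_compat; [|apply powerRZ_lt; auto].
  assert (0 <= rsum (fun s => z k (S s) * b ^ S s) (d k - 1)).
  { apply rsum_nonneg. intros j Hj. apply Rmult_le_pos.
    - apply Hz; lia.
    - apply pow_le; lra. }
  pose proof (pow_lt b (d k) Hb). lra.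
Qed.

Theorem mainTheorem2 (n : nat) (d : nat -> nat) (r : nat -> Z) (S : GSeed)
  (k : nat) (eps : Z) :
  is_gseed n d r S ->
  (k < n)%nat ->
  (eps = 1 \/ eps = -1)%Z ->
  forall i, (i < n)%nat ->
    action n r (gmutate n d r k eps S) i
    = mut_y d (gB S) (action n r S) (gz S) k eps i.
Proof.
  intros [Hr [Hd [Hsk [Hy Hz]]]] Hk Heps i Hi.
  assert (Hkk : gB S k k = 0%Z).
  { pose proof (Hsk k k Hk Hk). pose proof (Hr k Hk). nia. }
  assert (Hyk : 0 < gy S k) by auto.
  assert (Hrk : 0 < IZR (r k)) by (apply IZR_lt; auto).
  set (X := fun j => IZR (r j) * gy S j * gq S j).
  set (Ek := rsum (fun j => IZR (r j) * IZR (gB S j k) * gy S j * gq S j) n).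
  assert (Hak : action n r S k = gy S k * exp Ek) by reflexivity.
  assert (Hakp : 0 < action n r S k).
  { rewrite Hak. apply Rmult_lt_0_compat; auto. apply exp_pos. }
  set (Py := Pcirc d (gz S) k eps (powerRZ (gy S k) eps)).
  set (Pb := Pcirc d (gz S) k eps (powerRZ (action n r S k) eps)).
  assert (HPy : 0 < Py) by (apply Pcirc_pos; auto; apply powerRZ_lt; auto).
  assert (HPb : 0 < Pb) by (apply Pcirc_pos; auto; apply powerRZ_lt; auto).
  assert (F1 : forall j, j <> k ->
    mut_y d (gB S) (gy S) (gz S) k eps j * mut_q n d r k eps S j = gy S j * gq S j).
  { intros j Hj. unfold mut_y, mut_q.
    destruct (Nat.eqb_spec j k); [contradiction|]. fold Py.
    set (c := posp (eps * Z.of_nat (d k) * gB S k j)).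
    assert (E1 : powerRZ (gy S k) c * powerRZ (gy S k) (- c) = 1).
    { rewrite <- powerRZ_add by lra. rewrite Z.add_opp_diag_r. reflexivity. }
    assert (E2 : powerRZ Py (- gB S k j) * powerRZ Py (gB S k j) = 1).
    { rewrite <- powerRZ_add by lra. rewrite Z.add_opp_diag_l. reflexivity. }
    transitivity (gy S j * gq S j * (powerRZ (gy S k) c * powerRZ (gy S k) (- c))
       * (powerRZ Py (- gB S k j) * powerRZ Py (gB S k j))); [ring|].
    rewrite E1, E2. ring. }
  set (W := rsum (fun j => IZR (posp (- eps * gB S j k * Z.of_nat (d k))) * X j) n).
  assert (HS : IZR (r k) * rsum (fun i' => IZR (posp (eps * Z.of_nat (d k) * gB S k i'))
                 * gq S i' * gy S i' * gy S k) n = gy S k * W).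
  { unfold W. rewrite <- !rsum_scal. apply rsum_ext. intros j Hj.
    assert (HZ : (r k * posp (eps * Z.of_nat (d k) * gB S k j))%Z
                 = (posp (- eps * gB S j k * Z.of_nat (d k)) * r j)%Z).
    { rewrite <- posp_mul by (pose proof (Hr k Hk); lia).
      rewrite (Z.mul_comm (posp _) (r j)), <- posp_mul by (pose proof (Hr j Hj); lia).
      f_equal. pose proof (Hsk j k Hj Hk). nia. }
    unfold X. transitivity (IZR (r k * posp (eps * Z.of_nat (d k) * gB S k j)) * gq S j * gy S j * gy S k).
    { rewrite mult_IZR. ring. }
    rewrite HZ, mult_IZR. ring. }
  assert (HW : W = rsum (fun j => if Nat.eqb j k then 0 else
                 IZR (posp (- eps * gB S j k * Z.of_nat (d k))) * X j) n).
  { unfold W. rewrite (rsum_split _ k) by auto. rewrite Hkk.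
    replace (- eps * 0 * Z.of_nat (d k))%Z with 0%Z by ring. change (posp 0) with 0%Z. rewrite Rmult_0_l, Rplus_0_l. reflexivity. }
  assert (HEk : Ek = rsum (fun j => if Nat.eqb j k then 0 else IZR (gB S j k) * X j) n).
  { unfold Ek. rewrite (rsum_split _ k) by auto. rewrite Hkk. simpl.
    rewrite Rmult_0_r, !Rmult_0_l, Rplus_0_l. apply rsum_ext. intros j _.
    destruct (Nat.eqb j k); unfold X; ring. }
  assert (Hyq : IZR (r k) * mut_y d (gB S) (gy S) (gz S) k eps k * mut_q n d r k eps S k
     = - X k + W + ln (Pb / Py)).
  { unfold mut_y, mut_q. rewrite Nat.eqb_refl. fold Py Pb.
    cbv zeta.
    transitivity (- X k + / gy S k * (IZR (r k) * rsum (fun i' => IZR (posp (eps * Z.of_nat (d k) * gB S k i'))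
                 * gq S i' * gy S i' * gy S k) n) + ln (Pb / Py)).
    { unfold X. field. split; lra. }
    rewrite HS. field. lra. }
  destruct (Nat.eqb_spec i k) as [->|Hik].
  -
    unfold action at 1, gmutate. cbn [gy gB gq].
    unfold mut_y at 1 3. rewrite !Nat.eqb_refl.
    rewrite (rsum_split _ k) by auto.
    unfold mut_B at 1. rewrite Nat.eqb_refl. simpl orb. rewrite Hkk.
    rewrite (rsum_ext _ (fun j => - (if Nat.eqb j k then 0 else IZR (gB S j k) * X j))).
    2:{ intros j Hj. destruct (Nat.eqb_spec j k); [ring|].
        unfold mut_B. rewrite Nat.eqb_refl, Bool.orb_true_r. rewrite opp_IZR.
        transitivity (- (IZR (gB S j k) * (IZR (r j) * (mut_y d (gB S) (gy S) (gz S) k eps j * mut_q n d r k eps S j)))); [ring|].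
        rewrite F1 by auto. unfold X; ring. }
    rewrite (rsum_ext _ (fun j => (-1) * (if Nat.eqb j k then 0 else IZR (gB S j k) * X j)))
      by (intros; ring).
    rewrite rsum_scal, <- HEk, Hak. simpl IZR.
    replace (IZR (r k) * 0 * mut_y d (gB S) (gy S) (gz S) k eps k * mut_q n d r k eps S k + -1 * Ek) with (- Ek) by ring.
    rewrite exp_Ropp. field. split; [apply Rgt_not_eq, exp_pos|lra].
  -
    set (c := posp (eps * Z.of_nat (d k) * gB S k i)).
    set (Ei := rsum (fun j => IZR (r j) * IZR (gB S j i) * gy S j * gq S j) n).
    assert (HEi : Ei = IZR (gB S k i) * X k
       + rsum (fun j => if Nat.eqb j k then 0 else IZR (gB S j i) * X j) n).
    { unfold Ei. rewrite (rsum_split _ k) by auto. f_equal; [unfold X; ring|].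
      apply rsum_ext. intros j _. destruct (Nat.eqb j k); unfold X; ring. }
    assert (Hexp : rsum (fun j => IZR (r j) * IZR (gB (gmutate n d r k eps S) j i)
         * gy (gmutate n d r k eps S) j * gq (gmutate n d r k eps S) j) n
         = Ei - IZR (gB S k i) * ln (Pb / Py) + IZR c * Ek).
    { cbn [gmutate gB gy gq]. rewrite (rsum_split _ k) by auto.
      rewrite (rsum_ext _ (fun j =>
          (if Nat.eqb j k then 0 else IZR (gB S j i) * X j)
          + IZR (gB S k i) * (if Nat.eqb j k then 0 else
                 IZR (posp (- eps * gB S j k * Z.of_nat (d k))) * X j)
          + IZR c * (if Nat.eqb j k then 0 else IZR (gB S j k) * X j))).
      2:{ intros j Hj. destruct (Nat.eqb_spec j k); [ring|].
          unfold mut_B at 1. destruct (Nat.eqb_spec j k); [contradiction|].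
          destruct (Nat.eqb_spec i k); [contradiction|]. simpl orb. fold c.
          transitivity (IZR (gB S j i + posp (- eps * gB S j k * Z.of_nat (d k)) * gB S k i + gB S j k * c)
             * (IZR (r j) * (mut_y d (gB S) (gy S) (gz S) k eps j * mut_q n d r k eps S j))); [ring|].
          rewrite F1 by auto. rewrite !plus_IZR, !mult_IZR. unfold X; ring. }
      rewrite !rsum_plus, !rsum_scal. rewrite <- HW, <- HEk.
      unfold mut_B at 1. rewrite Nat.eqb_refl. simpl orb.
      transitivity (IZR (- gB S k i) * (IZR (r k) * mut_y d (gB S) (gy S) (gz S) k eps k * mut_q n d r k eps S k)
        + rsum (fun j => if Nat.eqb j k then 0 else IZR (gB S j i) * X j) n
        + IZR (gB S k i) * W + IZR c * Ek); [ring|].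
      rewrite Hyq, HEi, opp_IZR. ring. }
    unfold action at 1. rewrite Hexp. cbn [gmutate gy].
    unfold mut_y. destruct (Nat.eqb_spec i k); [contradiction|]. fold c Py Pb.
    rewrite Hak. unfold action. fold Ei.
    assert (Hyi : 0 < gy S i) by auto.
    rewrite !powerRZ_exp by (auto; apply Rmult_lt_0_compat; auto; apply exp_pos).
    rewrite ln_mult by (auto; apply exp_pos). rewrite ln_exp.
    unfold Rdiv. rewrite ln_mult by (auto; apply Rinv_0_lt_compat; auto).
    rewrite ln_Rinv by auto.
    rewrite <- (exp_ln (gy S i)) at 1 by auto.
    rewrite <- (exp_ln (gy S i)) at 2 by auto.
    rewrite <- !exp_plus. f_equal. rewrite opp_IZR. ring.
Qed.
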